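(* Let $(S,\ast)$ be an adequate commutative partial semigroup. Then $J_\delta(S)$ is a closed two-sided ideal of $\delta S$.
   Context: A partial semigroup is a pair $(S,\ast)$ where $\ast$ is an operation defined on a subset of $S\times S$ such that for all $x,y,z\in S$, $(x\ast y)\ast z=x\ast(y\ast z)$ in the sense that if either side is defined, so is the other and they are equal; it is commutative if $x\ast y=y\ast x$ whenever defined. For $s\in S$, $\phi_S(s)=\{t\in S: s\ast t\text{ is defined}\}$; for $H\in\mathcal{P}_f(S)$ (finite nonempty subsets), $\sigma_S(H)=\bigcap_{s\in H}\phi_S(s)$. $(S,\ast)$ is adequate if $\sigma_S(H)\ne\emptyset$ for all $H\in\mathcal{P}_f(S)$. $\beta S$ is the Stone–Čech compactification of discrete $S$ (ultrafilters on $S$, with basic open sets $\overline{A}=\{p: A\in p\}$), and $\delta S=\bigcap_{x\in S}\overline{\phi_S(x)}\subseteq\beta S$. For $s\in S$ and $A\subseteq S$, $s^{-1}A=\{t\in\phi_S(s): s\ast t\in A\}$; for $p\in\beta S$, $q\in\delta S$, $p\ast q=\{A\subseteq S:\{s\in S: s^{-1}A\in q\}\in p\}$. With this operation $\delta S$ is a compact right topological semigroup. A sequence $\langle y_n\rangle$ in $S$ is adequate if $\prod_{n\in F}y_n$ is defined for every $F\in\mathcal{P}_f(\mathbb{N})$ and for every $K\in\mathcal{P}_f(S)$ there is $m$ with $\prod_{n\in F}y_n\in\sigma_S(K)$ for all $F\in\mathcal{P}_f(\mathbb{N})$ with $\min F\ge m$. $\mathcal{T}_S$ is the set of adequate sequences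 in $S$. For $W\in\mathcal{P}_f(S)$, $a\in S$, $W\ast a=\{w\ast a: w\in W,\ w\ast a\text{ defined}\}$. $A\subseteq S$ is a $J_\delta$-set if for every $F\in\mathcal{P}_f(\mathcal{T}_S)$ and $W\in\mathcal{P}_f(S)$ there exist $a\in\sigma_S(W)$ and $H\in\mathcal{P}_f(\mathbb{N})$ such that for each $f\in F$, $\prod_{t\in H}f(t)\in\sigma_S(W\ast a)$ and $a\ast\prod_{t\in H}f(t)\in A$. $J_\delta(S)=\{p\in\delta S: \text{every } A\in p \text{ is a } J_\delta\text{-set}\}$. *)

(* Defs.v *)
From Stdlib Require Import List Sorted Arith.
Import ListNotations.

Section PartialSemigroup.
Variable S : Type.
(* A partial operation: [op x y = None] means x * y is undefined. *)
Variable op : S -> S -> option S.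

(* (x*y)*z = x*(y*z): if either side is defined so is the other, and they agree *)
Definition ps_assoc : Prop :=
  forall x y z : S,
    match op x y with Some xy => op xy z | None => None end =
    match op y z with Some yz => op x yz | None => None end.

Definition ps_comm : Prop := forall x y : S, op x y = op y x.

Definition phiS (s : S) : S -> Prop := fun t => op s t <> None.

Definition sigmaS (H : list S) : S -> Prop := fun t => forall s, In s H -> phiS s t.

Definition ps_adequate : Prop :=
  forall H : list S, H <> [] -> exists t, sigmaS H t.

Fixpoint lprod (l : list S) : option S :=
  match l with
  | [] => None
  | [x] => Some x
  | x :: l' => match lprod l' with Some v => op x v | None => None end
  end.

(* A finite nonempty subset F of N is represented by a nonempty strictly
   increasing list; prod_{n in F} y_n is the product in increasing order. *)
Definition finset_nat (F : list nat) : Prop := F <> [] /\ Sorted lt F.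

Definition seqprod (y : nat -> S) (F : list nat) : option S := lprod (map y F).

Definition adequate_seq (y : nat -> S) : Prop :=
  (forall F, finset_nat F -> exists v, seqprod y F = Some v) /\
  (forall K : list S, K <> [] ->
     exists m, forall F, finset_nat F -> m <= hd 0 F ->
       forall v, seqprod y F = Some v -> sigmaS K v).

(* t in sigma_S(W * a), where W * a = { w*a | w in W, w*a defined } *)
Definition sigma_Wa (W : list S) (a : S) (t : S) : Prop :=
  forall w v, In w W -> op w a = Some v -> phiS v t.

Definition Jdelta_set (A : S -> Prop) : Prop :=
  forall F : list (nat -> S), F <> [] -> (forall f, In f F -> adequate_seq f) ->
  forall W : list S, W <> [] ->
  exists a, sigmaS W a /\
  exists H, finset_nat H /\
    forall f, In f F ->
      exists v, seqprod f H = Some v /\ sigma_Wa W a v /\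
      exists u, op a v = Some u /\ A u.

Definition ultrafilter (p : (S -> Prop) -> Prop) : Prop :=
  ~ p (fun _ => False) /\
  p (fun _ => True) /\
  (forall A B : S -> Prop, p A -> (forall x, A x -> B x) -> p B) /\
  (forall A B : S -> Prop, p A -> p B -> p (fun x => A x /\ B x)) /\
  (forall A : S -> Prop, p A \/ p (fun x => ~ A x)).

(* delta S = intersection over x of the closures of phi_S(x) *)
Definition deltaS (p : (S -> Prop) -> Prop) : Prop :=
  ultrafilter p /\ forall x, p (phiS x).

Definition sinv (s : S) (A : S -> Prop) : S -> Prop :=
  fun t => exists u, op s t = Some u /\ A u.

Definition uf_mul (p q : (S -> Prop) -> Prop) : (S -> Prop) -> Prop :=
  fun A => p (fun s => q (sinv s A)).

Definition Jdelta (p : (S -> Prop) -> Prop) : Prop :=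
  deltaS p /\ forall A, p A -> Jdelta_set A.

(* closed subset of beta S: contains every ultrafilter in its closure
   (p is in the closure iff every basic neighbourhood cl(A), A in p, meets it) *)
Definition uf_closed (J : ((S -> Prop) -> Prop) -> Prop) : Prop :=
  forall p, ultrafilter p -> (forall A, p A -> exists r, J r /\ r A) -> J p.

(* two-sided ideal of the semigroup delta S (Hindman--Strauss: nonempty) *)
Definition two_sided_ideal_delta (J : ((S -> Prop) -> Prop) -> Prop) : Prop :=
  (forall p, J p -> deltaS p) /\
  (exists p, J p) /\
  (forall p q, deltaS p -> J q -> J (uf_mul p q) /\ J (uf_mul q p)).

End PartialSemigroup.

(* Main.v *)
Require Import Defs.
From Stdlib Require Import List Sorted Arith Lia Classical ClassicalEpsilon FunctionalExtensionality PropExtensionality.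
From mathcomp Require boolp classical_sets.
Import ListNotations.
Set Bullet Behavior "Strict Subproofs".

Lemma zornP (T : Type) (t0 : T) (R : T -> T -> Prop) :
  (forall t, R t t) -> (forall r s t, R r s -> R s t -> R r t) ->
  (forall A : T -> Prop, (forall s t, A s -> A t -> R s t \/ R t s) ->
     exists t, forall s, A s -> R s t) ->
  exists t, forall s, R t s -> R s t.
Proof.
  intros Hr Ht Hc.
  set (R' := fun x y => boolp.asbool (R x y)).
  assert (E : forall x y, R' x y = true <-> R x y).
  { intros x y. unfold R'. destruct (boolp.asboolP (R x y)); split; auto; discriminate. }
  destruct (@classical_sets.ZL_preorder T t0 R') as [t Ht0].
  - intros t. apply E. auto.
  - intros r s u H1 H2. apply E. apply E in H1. apply E in H2. eauto.
  - intros A HA. destruct (Hc A) as [t Hta].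
    + intros s u Hs Hu. destruct (HA s u Hs Hu) as [H|H]; [left|right]; apply E; exact H.
    + exists t. intros s Hs. apply E. auto.
  - exists t. intros s Hs. apply E. apply Ht0. apply E. exact Hs.
Qed.

Section UF.
Variable X : Type.
Definition UF := (X -> Prop) -> Prop.

Definition is_filter (F : UF) : Prop :=
  ~ F (fun _ => False) /\ F (fun _ => True) /\
  (forall A B : X -> Prop, F A -> (forall x, A x -> B x) -> F B) /\
  (forall A B : X -> Prop, F A -> F B -> F (fun x => A x /\ B x)).

Lemma uf_filter p : ultrafilter X p -> is_filter p.
Proof. intros (H1&H2&H3&H4&_). repeat split; auto. Qed.

Lemma uf_mono p A B : ultrafilter X p -> p A -> (forall x, A x -> B x) -> p B.
Proof. intros (H1&H2&H3&H4&_). eauto. Qed.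

Lemma uf_and p A B : ultrafilter X p -> p A -> p B -> p (fun x => A x /\ B x).
Proof. intros (H1&H2&H3&H4&_). eauto. Qed.

Lemma uf_true p : ultrafilter X p -> p (fun _ => True).
Proof. intros (H1&H2&H3&H4&_). eauto. Qed.

Lemma uf_compl p A : ultrafilter X p -> ~ p A -> p (fun x => ~ A x).
Proof. intros (H1&H2&H3&H4&H5) H. destruct (H5 A); tauto. Qed.

Lemma uf_nonempty p A : ultrafilter X p -> p A -> exists x, A x.
Proof.
  intros Hu HA. apply NNPP. intro N.
  destruct Hu as (H1&_&H3&_). apply H1. apply (H3 A); auto. intros x Hx. apply N. eauto.
Qed.

Lemma uf_not_compl p A : ultrafilter X p -> p A -> ~ p (fun x => ~ A x).
Proof.
  intros Hu HA HB. destruct (uf_nonempty p _ Hu (uf_and p _ _ Hu HA HB)) as [x [H1 H2]]. auto.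
Qed.

Lemma uf_ext p q : ultrafilter X p -> ultrafilter X q -> (forall A, p A -> q A) -> p = q.
Proof.
  intros Hp Hq H. apply functional_extensionality. intros A.
  apply propositional_extensionality. split; auto.
  intros HqA. apply NNPP. intros N. apply (uf_not_compl q A Hq HqA). apply H. apply uf_compl; auto.
Qed.

Lemma ultra_lemma (F : UF) : is_filter F -> exists p, ultrafilter X p /\ forall A, F A -> p A.
Proof.
  intros HF.
  set (T := {G : UF | is_filter G /\ forall A, F A -> G A}).
  assert (t0 : T). { exists F. split; auto. }
  destruct (zornP T t0 (fun G1 G2 => forall A, proj1_sig G1 A -> proj1_sig G2 A)) as [[M [HM HFM]] Hmax].
  - auto.
  - eauto.
  - intros Ch Htot.
    set (B := fun A => F A \/ exists G : T, Ch G /\ proj1_sig G A).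
    assert (HB : is_filter B).
    { destruct HF as (F1&F2&F3&F4).
      assert (GF : forall G : T, is_filter (proj1_sig G)) by (intros [G [G1 G2]]; exact G1).
      assert (GFF : forall G : T, forall A, F A -> proj1_sig G A) by (intros [G [G1 G2]]; exact G2).
      split; [|split; [|split]].
      - intros [H|[G [_ H]]]; auto. destruct (GF G) as [G1 _]; auto.
      - left; auto.
      - intros A C [H|[G [HG H]]] HAC; [left; eauto|right].
        exists G. split; auto. destruct (GF G) as (_&_&G13&_). eauto.
      - intros A C [H|[G [HG H]]] [H'|[G' [HG' H']]].
        + left; auto.
        + right. exists G'. split; auto. destruct (GF G') as (_&_&_&G14). auto.
        + right. exists G. split; auto. destruct (GF G) as (_&_&_&G14). auto.
        + destruct (Htot _ _ HG HG') as [Hl|Hl].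
          * right. exists G'. split; auto. destruct (GF G') as (_&_&_&G14). auto.
          * right. exists G. split; auto. destruct (GF G) as (_&_&_&G14). auto. }
    exists (exist _ B (conj HB (fun A H => or_introl H))). intros G HG A HA. simpl. right. eauto.
  - exists M. split; [|auto].
    destruct HM as (M1&M2&M3&M4).
    split; [auto|split; [auto|split; [auto|split; [auto|]]]].
    intros A. destruct (classic (M A)) as [H|H]; [left; auto|right].
    apply NNPP. intros N.
    set (G := fun B => exists C, M C /\ forall x, C x -> A x -> B x).
    assert (HG : is_filter G).
    { split; [|split; [|split]].
      - intros [C [HC HCA]]. apply N. apply (M3 C). exact HC. intros x Hx Hx'. exact (HCA x Hx Hx').
      - exists (fun _ => True). split; auto.
      - intros B1 B2 [C [HC HCA]] H12. exists C. split; auto.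
      - intros B1 B2 [C [HC HCA]] [C' [HC' HCA']]. exists (fun x => C x /\ C' x). split; auto.
        intros x [] Hx. split; eauto. }
    assert (HGF : forall A0, F A0 -> G A0).
    { intros A0 HA0. exists A0. split; auto. }
    specialize (Hmax (exist _ G (conj HG HGF))). simpl in Hmax.
    apply H. apply Hmax.
    + intros B HBm. exists B. split; auto.
    + exists (fun _ => True). split; auto.
Qed.

Lemma compactness (CC : ((UF) -> Prop) -> Prop) :
  (exists C, CC C) ->
  (forall C, CC C -> uf_closed X C /\ (forall r, C r -> ultrafilter X r) /\ exists r, C r) ->
  (forall C1 C2, CC C1 -> CC C2 -> exists C3, CC C3 /\ forall r, C3 r -> C1 r /\ C2 r) ->
  exists p, ultrafilter X p /\ forall C, CC C -> C p.
Proof.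
  intros [C0 HC0] Hcl Hdir.
  set (F := fun A => exists C, CC C /\ forall r, C r -> r A).
  assert (HF : is_filter F).
  { split; [|split; [|split]].
    - intros [C [HC H]]. destruct (Hcl C HC) as (_&Hu&[r Hr]).
      destruct (uf_nonempty r _ (Hu r Hr) (H r Hr)) as [x []].
    - exists C0. split; auto. intros r Hr. apply uf_true. apply (proj1 (proj2 (Hcl C0 HC0))). auto.
    - intros A B [C [HC H]] HAB. exists C. split; auto. intros r Hr.
      apply (uf_mono r A B). apply (proj1 (proj2 (Hcl C HC))); auto. apply H; auto. auto.
    - intros A1 B1 [C [HC H]] [C' [HC' H']]. destruct (Hdir C C' HC HC') as [C3 [HC3 H3]].
      exists C3. split; auto. intros r Hr. destruct (H3 r Hr).
      apply uf_and; [apply (proj1 (proj2 (Hcl C3 HC3))); auto|apply H; auto|apply H'; auto]. }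
  destruct (ultra_lemma F HF) as [p [Hp HpF]].
  exists p. split; auto. intros C HC. destruct (Hcl C HC) as (Hc&Hu&_).
  apply Hc; auto. intros A HA. apply NNPP. intros N.
  apply (uf_not_compl p A Hp HA). apply HpF. exists C. split; auto.
  intros r Hr. apply uf_compl; auto. intro. apply N. eauto.
Qed.

End UF.
Arguments uf_mono {X} p A B.
Arguments uf_and {X} p A B.
Arguments uf_true {X} p.
Arguments uf_compl {X} p A.
Arguments uf_nonempty {X} p A.
Arguments uf_not_compl {X} p A.
Arguments uf_ext {X} p q.
Section Semi.
Variable X : Type.
Variable opX : X -> X -> option X.
Variable HAs : ps_assoc X opX.

Local Notation mul := (uf_mul X opX).
Local Notation dX := (deltaS X opX).
Local Notation U := (UF X).

Definition oopX (a b : option X) : option X :=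
  match a, b with Some x, Some y => opX x y | _, _ => None end.

Lemma oopX_assoc a b c : oopX (oopX a b) c = oopX a (oopX b c).
Proof.
  destruct a as [x|], b as [y|], c as [z|]; simpl; auto;
  try (destruct (opX x y); auto; fail); try (destruct (opX y z); auto; fail).
  pose proof (HAs x y z) as H. simpl in H. exact H.
Qed.

Lemma d_ultra p : dX p -> ultrafilter X p.
Proof. intros [H _]; exact H. Qed.

Lemma d_phi p x : dX p -> p (phiS X opX x).
Proof. intros [_ H]; exact (H x). Qed.

Lemma d_sigma p Z : dX p -> p (sigmaS X opX Z).
Proof.
  intros Hp. pose proof (d_ultra p Hp) as Hu. induction Z as [|z Z IH].
  - apply (uf_mono p (fun _ => True)); auto. apply uf_true; auto.
    intros x _ s [].
  - apply (uf_mono p (fun t => phiS X opX z t /\ sigmaS X opX Z t)); auto.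
    apply uf_and; auto. apply d_phi; auto.
    intros t [H1 H2] s [<-|Hs]; auto.
Qed.

Lemma d_local q x (P Q : X -> Prop) : dX q ->
  (forall t, phiS X opX x t -> (P t <-> Q t)) -> (q P <-> q Q).
Proof.
  intros Hq H. pose proof (d_ultra q Hq) as Hu. split; intros HP.
  - apply (uf_mono q (fun t => P t /\ phiS X opX x t)); auto.
    apply uf_and; auto. apply d_phi; auto.
    intros t [H1 H2]. apply H; auto.
  - apply (uf_mono q (fun t => Q t /\ phiS X opX x t)); auto.
    apply uf_and; auto. apply d_phi; auto.
    intros t [H1 H2]. apply H; auto.
Qed.

Lemma uf_ext_iff p (P Q : X -> Prop) : ultrafilter X p -> (forall x, P x <-> Q x) -> (p P <-> p Q).
Proof. intros Hp H. split; intros; eapply uf_mono; eauto; intros; apply H; auto. Qed.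

Lemma mul_ultra p q : ultrafilter X p -> dX q -> ultrafilter X (mul p q).
Proof.
  intros Hp Hq. pose proof (d_ultra q Hq) as Hu. unfold uf_mul.
  split; [|split; [|split; [|split]]].
  - intros H. destruct (uf_nonempty p _ Hp H) as [s Hs].
    destruct (uf_nonempty q _ Hu Hs) as [t [u [_ []]]].
  - apply (uf_mono p (fun _ => True)); auto. apply uf_true; auto.
    intros s _. apply (uf_mono q (phiS X opX s)); auto. apply d_phi; auto.
    intros t Ht. unfold sinv. destruct (opX s t) as [u|] eqn:E. exists u; auto. congruence.
  - intros A B HA' HAB. apply (uf_mono p _ _ Hp HA').
    intros s Hs. apply (uf_mono q _ _ Hu Hs).
    intros t [u [H1 H2]]. exists u; auto.
  - intros A B H1 H2. apply (uf_mono p _ _ Hp (uf_and p _ _ Hp H1 H2)).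
    intros s [Hs1 Hs2]. apply (uf_mono q _ _ Hu (uf_and q _ _ Hu Hs1 Hs2)).
    intros t [[u [E1 Au]] [u' [E2 Bu]]]. rewrite E1 in E2. inversion E2; subst. exists u'; auto.
  - intros A. destruct (Hp) as (_&_&_&_&H5).
    destruct (H5 (fun s => q (sinv X opX s A))) as [H|H]; [left; auto|right].
    apply (uf_mono p _ _ Hp H). intros s Hs.
    apply (uf_mono q _ _ Hu (uf_and q _ _ Hu (uf_compl q _ Hu Hs) (d_phi q s Hq))).
    intros t [H1 H2]. unfold sinv. destruct (opX s t) as [u|] eqn:E; [|congruence].
    exists u. split; auto. intros Au. apply H1. exists u; auto.
Qed.


Lemma mul_delta p q : dX p -> dX q -> dX (mul p q).
Proof.
  intros Hp Hq. split. apply mul_ultra; auto. apply d_ultra; auto.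
  intros x. unfold uf_mul. apply (uf_mono p _ _ (d_ultra p Hp) (d_phi p x Hp)).
  intros s Hs. unfold phiS in Hs. destruct (opX x s) as [y|] eqn:E; [|congruence].
  apply (uf_mono q _ _ (d_ultra q Hq) (d_phi q y Hq)).
  intros t Ht. unfold phiS in Ht. pose proof (oopX_assoc (Some x) (Some s) (Some t)) as H.
  simpl in H. rewrite E in H. unfold sinv, phiS.
  destruct (opX s t) as [u|]. exists u; split; auto. simpl in H. congruence.
  simpl in H. congruence.
Qed.

Lemma mul_assoc p q r : dX p -> dX q -> dX r -> mul (mul p q) r = mul p (mul q r).
Proof.
  intros Hp Hq Hr. apply functional_extensionality; intro A.
  apply propositional_extensionality. unfold uf_mul.
  apply uf_ext_iff. apply d_ultra; auto. intros x.
  apply (d_local q x); auto. intros t Ht. unfold phiS in Ht.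
  destruct (opX x t) as [u|] eqn:E; [|congruence].
  unfold sinv at 1. rewrite E. split.
  - intros [u' [E' Hu']]. inversion E'; subst u'.
    apply (uf_mono r _ _ (d_ultra r Hr) Hu'). intros w [z [Ez Az]].
    pose proof (oopX_assoc (Some x) (Some t) (Some w)) as H. simpl in H. rewrite E in H.
    simpl in H. rewrite Ez in H.
    unfold sinv. destruct (opX t w) as [v'|] eqn:Ev; [|discriminate].
    exists v'. split; auto. exists z. split; auto.
  - intros Hr'. exists u. split; auto.
    apply (uf_mono r _ _ (d_ultra r Hr) Hr'). intros w [v [Ev [z [Ez Az]]]].
    pose proof (oopX_assoc (Some x) (Some t) (Some w)) as H. simpl in H. rewrite E in H.
    simpl in H. rewrite Ev in H. simpl in H. exists z. split; auto. congruence.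
Qed.


Lemma closure_contains (C : U -> Prop) p A : ultrafilter X p ->
  (forall B, p B -> exists r, C r /\ r B) -> (forall r, C r -> ultrafilter X r /\ r A) -> p A.
Proof.
  intros Hp Hm HC. apply NNPP. intros N.
  destruct (Hm _ (uf_compl p A Hp N)) as [r [Cr Hr]].
  destruct (HC r Cr) as [Hu HA']. exact (uf_not_compl r A Hu HA' Hr).
Qed.

Lemma closed_contains (P : (X -> Prop) -> Prop) :
  uf_closed X (fun q => dX q /\ forall A, P A -> q A).
Proof.
  intros p Hp Hm. split; [split; auto|].
  - intros x. apply (closure_contains (fun q => dX q /\ forall A, P A -> q A)); auto.
    intros r [Hr _]. split. apply d_ultra; auto. apply d_phi; auto.
  - intros A HA. apply (closure_contains (fun q => dX q /\ forall A, P A -> q A)); auto.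
    intros r [Hr Hr']. split. apply d_ultra; auto. auto.
Qed.

Lemma closed_delta : uf_closed X dX.
Proof.
  intros p Hp Hm. destruct (closed_contains (fun _ => False) p Hp) as [H _]; auto.
  intros A HA. destruct (Hm A HA) as [r [Hr Hr']]. exists r. split; auto. split; auto.
  intros _ [].
Qed.

Lemma closed_and_basic C B : uf_closed X C -> (forall r, C r -> ultrafilter X r) ->
  uf_closed X (fun x => C x /\ x B).
Proof.
  intros HC Hu p Hp Hm. split.
  - apply HC; auto. intros A HA. destruct (Hm A HA) as [r [[Cr _] Hr]]. eauto.
  - apply (closure_contains (fun x => C x /\ x B)); auto. intros r [Cr Br]. split; auto.
Qed.

Lemma closed_image C q : uf_closed X C -> (forall x, C x -> dX x) -> dX q ->
  uf_closed X (fun z => exists x, C x /\ z = mul x q).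
Proof.
  intros HC HCd Hq z Hz Hm.
  set (CC := fun D : U -> Prop => exists A, z A /\ D = (fun x => C x /\ x (fun s => q (sinv X opX s A)))).
  destruct (compactness X CC) as [x [Hx Hall]].
  - exists (fun x => C x /\ x (fun s => q (sinv X opX s (fun _ => True)))).
    exists (fun _ => True). split; auto. apply uf_true; auto.
  - intros D [A [HA ->]]. split; [|split].
    + apply closed_and_basic; auto. intros r Cr. apply d_ultra; auto.
    + intros r [Cr _]. apply d_ultra; auto.
    + destruct (Hm A HA) as [r [[x [Cx ->]] Hr]]. exists x. split; auto.
  - intros D1 D2 [A1 [HA1 ->]] [A2 [HA2 ->]].
    exists (fun x => C x /\ x (fun s => q (sinv X opX s (fun t => A1 t /\ A2 t)))). split.
    + exists (fun t => A1 t /\ A2 t). split; auto. apply uf_and; auto.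
    + intros r [Cr Hr]. pose proof (d_ultra r (HCd r Cr)) as Hur.
      pose proof (d_ultra q Hq) as Huq.
      split; split; auto; apply (uf_mono r _ _ Hur Hr); intros s Hs;
        apply (uf_mono q _ _ Huq Hs); intros t [u [E [H1 H2]]]; exists u; auto.
  - assert (Cx : C x).
    { destruct (Hall (fun x => C x /\ x (fun s => q (sinv X opX s (fun _ => True))))) as [H _]; auto.
      exists (fun _ => True). split; auto. apply uf_true; auto. }
    exists x. split; auto. apply uf_ext; auto.
    apply mul_ultra; auto.
    intros A HA. destruct (Hall (fun x => C x /\ x (fun s => q (sinv X opX s A)))) as [_ H]; auto.
    exists A. split; auto.
Qed.

Lemma closed_preimage C q e : uf_closed X C -> (forall x, C x -> dX x) -> dX q ->
  uf_closed X (fun x => C x /\ mul x q = e).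
Proof.
  intros HC HCd Hq p Hp Hm. split.
  - apply HC; auto. intros A HA. destruct (Hm A HA) as [r [[Cr _] Hr]]. eauto.
  - destruct (Hm _ (uf_true p Hp)) as [r0 [[Cr0 E0] _]].
    assert (Hue : ultrafilter X e).
    { rewrite <- E0. apply mul_ultra; auto. apply d_ultra; auto. }
    apply uf_ext; auto. apply mul_ultra; auto.
    intros A HA. unfold uf_mul in HA. destruct (Hm _ HA) as [r [[Cr Er] Hr]].
    rewrite <- Er. exact Hr.
Qed.

Definition semig (M : U -> Prop) := forall x y, M x -> M y -> M (mul x y).

Lemma min_closed (M0 : U -> Prop) (Q : (U -> Prop) -> Prop) :
  uf_closed X M0 -> (forall x, M0 x -> ultrafilter X x) -> (exists x, M0 x) -> Q M0 ->
  (forall Ch : (U -> Prop) -> Prop, (forall M, Ch M -> Q M) ->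
     Q (fun x => M0 x /\ forall M, Ch M -> M x)) ->
  exists M, (uf_closed X M /\ (forall x, M x -> M0 x) /\ (exists x, M x) /\ Q M) /\
    forall M', (uf_closed X M' /\ (forall x, M' x -> M0 x) /\ (exists x, M' x) /\ Q M') ->
      (forall x, M' x -> M x) -> forall x, M x -> M' x.
Proof.
  intros HC0 Hu0 Hne0 HQ0 HQint.
  set (Good := fun M => uf_closed X M /\ (forall x, M x -> M0 x) /\ (exists x, M x) /\ Q M).
  set (T := {M | Good M}).
  assert (t0 : T). { exists M0. split; auto. }
  destruct (zornP T t0 (fun M1 M2 => forall x, proj1_sig M2 x -> proj1_sig M1 x)) as [[M HM] Hmax].
  - auto.
  - eauto.
  - intros Ch' Htot.
    set (Ch := fun M => exists t, Ch' t /\ M = proj1_sig t).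
    set (B := fun x => M0 x /\ forall M, Ch M -> M x).
    assert (GB : Good B).
    { split; [|split; [|split]].
      - intros p Hp Hm. split.
        + apply HC0; auto. intros A HA. destruct (Hm A HA) as [r [[H0 _] Hr]]. eauto.
        + intros M [t [Ht ->]]. destruct (proj2_sig t) as [Hc _]. apply Hc; auto.
          intros A HA. destruct (Hm A HA) as [r [[_ H1] Hr]]. exists r. split; auto.
          apply H1. exists t; auto.
      - intros x [H _]; auto.
      - set (CC := fun D => D = M0 \/ exists t, Ch' t /\ D = proj1_sig t).
        destruct (compactness X CC) as [p [Hp Hall]].
        + exists M0. left; auto.
        + intros D [->|[t [Ht ->]]].
          * split; auto.
          * destruct (proj2_sig t) as (Hc&Hs&Hne&_). split; auto.
        + intros D1 D2 [->|[t1 [Ht1 ->]]] [->|[t2 [Ht2 ->]]].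
          * exists M0. split; [left; auto|auto].
          * exists (proj1_sig t2). split; [right; eauto|]. intros r Hr. split; auto.
            destruct (proj2_sig t2) as (_&Hs&_). auto.
          * exists (proj1_sig t1). split; [right; eauto|]. intros r Hr. split; auto.
            destruct (proj2_sig t1) as (_&Hs&_). auto.
          * destruct (Htot _ _ Ht1 Ht2) as [H|H].
            -- exists (proj1_sig t2). split; [right; eauto|]. auto.
            -- exists (proj1_sig t1). split; [right; eauto|]. auto.
        + exists p. split. apply Hall. left; auto.
          intros M [t [Ht ->]]. apply Hall. right; eauto.
      - apply HQint. intros M [t [Ht ->]]. destruct (proj2_sig t) as (_&_&_&H). auto. }
    exists (exist _ B GB). intros t Ht x Bx. simpl. destruct Bx as [_ H]. apply H. exists t; auto.
  - exists M. split; auto. intros M' HM' Hsub.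
    apply (Hmax (exist _ M' HM')). simpl. auto.
Qed.

Lemma ellis M0 : uf_closed X M0 -> (forall x, M0 x -> dX x) -> (exists x, M0 x) -> semig M0 ->
  exists e, M0 e /\ mul e e = e.
Proof.
  intros HC Hd Hne Hs.
  destruct (min_closed M0 semig) as [M [(MC&MM0&[e Me]&Ms) Hmin]]; auto.
  - intros x Hx. apply d_ultra; auto.
  - intros Ch HCh x y [Hx0 Hx] [Hy0 Hy]. split; auto. intros M HM. apply (HCh M HM); [apply Hx|apply Hy]; auto.
  - assert (HMe : forall x, M x -> exists y, M y /\ x = mul y e).
    { apply (Hmin (fun z => exists x, M x /\ z = mul x e)); [split; [|split; [|split]]|].
      - apply closed_image; auto.
      - intros z [x [Mx ->]]. auto.
      - exists (mul e e). exists e. auto.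
      - intros z1 z2 [x [Mx ->]] [y [My ->]]. exists (mul (mul x e) y). split; auto.
        symmetry; apply mul_assoc; auto.
      - intros z [x [Mx ->]]. auto. }
    destruct (HMe e Me) as [x [Mx Ex]].
    assert (HB : forall z, M z -> M z /\ mul z e = e).
    { apply (Hmin (fun z => M z /\ mul z e = e)); [split; [|split; [|split]]|].
      - apply closed_preimage; auto.
      - intros z [Mz _]; auto.
      - exists x. split; auto.
      - intros z1 z2 [M1 E1] [M2 E2]. split; auto. rewrite mul_assoc; auto. rewrite E2; auto.
      - intros z [Mz _]; auto. }
    exists e. split; auto. apply HB; auto.
Qed.


Lemma below_ideal (T I : U -> Prop) e r0 : uf_closed X T -> (forall x, T x -> dX x) -> semig T ->
  (forall t r, T t -> I r -> I (mul t r) /\ I (mul r t)) -> (forall r, I r -> T r) ->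
  I r0 -> T e -> mul e e = e ->
  exists f, I f /\ mul f f = f /\ mul e f = f /\ mul f e = f.
Proof.
  intros HC Hd Hs Hid HIT Ir0 Te Ee.
  assert (Iq : I (mul r0 e)) by (apply (Hid e r0); auto).
  assert (dq : dX (mul r0 e)) by auto.
  assert (de : dX e) by auto.
  assert (dr0 : dX r0) by auto.
  destruct (ellis (fun z => exists t, T t /\ z = mul t (mul r0 e))) as [u [[t [Tt ->]] Eu]].
  - apply closed_image; auto.
  - intros z [t [Tt ->]]. apply mul_delta; auto.
  - exists (mul e (mul r0 e)). exists e. auto.
  - intros z1 z2 [t [Tt ->]] [t' [Tt' ->]]. exists (mul (mul t (mul r0 e)) t'). split.
    + apply Hs; auto.
    + symmetry. apply mul_assoc; auto.
  - assert (dt : dX t) by auto.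
    set (u := mul t (mul r0 e)) in *.
    assert (du : dX u) by (apply mul_delta; auto).
    assert (Iu : I u) by (apply (proj1 (Hid t (mul r0 e) Tt Iq))).
    assert (Te0 : T e) by auto.
    assert (Eue : mul u e = u).
    { unfold u. rewrite mul_assoc; auto. rewrite mul_assoc; auto. rewrite Ee. reflexivity. }
    exists (mul e u). split; [|split; [|split]].
    + apply (proj1 (Hid e u Te Iu)).
    + rewrite mul_assoc; auto; try (apply mul_delta; auto).
      rewrite <- (mul_assoc u e u); auto. rewrite Eue. rewrite Eu. reflexivity.
    + rewrite <- mul_assoc; auto. rewrite Ee. reflexivity.
    + rewrite mul_assoc; auto. rewrite Eue. reflexivity.
Qed.

Lemma min_idem : (exists x, dX x) ->
  exists p, dX p /\ mul p p = p /\
    forall q, dX q -> mul q q = q -> mul p q = q -> mul q p = q -> q = p.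
Proof.
  intros Hne.
  destruct (min_closed dX (fun L => forall x y, dX x -> L y -> L (mul x y)))
    as [L [(LC&Ld&[l Ll]&Lid) Hmin]]; auto.
  - apply closed_delta.
  - intros x Hx. apply d_ultra; auto.
  - intros x y Hx Hy. apply mul_delta; auto.
  - intros Ch HCh x y Hx [Hy0 Hy]. split. apply mul_delta; auto.
    intros M HM. apply (HCh M HM); auto. apply Hy; auto.
  - destruct (ellis L) as [p [Lp Ep]]; auto.
    + exists l; auto.
    + intros x y Lx Ly. apply Lid; auto.
    + exists p. split; auto. split; auto.
      intros q dq Eq Epq Eqp.
      assert (Lq : L q) by (rewrite <- Eqp; apply Lid; auto).
      assert (HL : forall z, L z -> exists x, dX x /\ z = mul x q).
      { apply (Hmin (fun z => exists x, dX x /\ z = mul x q)); [split; [|split; [|split]]|].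
        - apply closed_image; auto. apply closed_delta.
        - intros z [x [dx ->]]. apply mul_delta; auto.
        - exists (mul q q). exists q. auto.
        - intros x z dx [y [dy ->]]. exists (mul x y). split. apply mul_delta; auto.
          symmetry. apply mul_assoc; auto.
        - intros z [x [dx ->]]. apply Lid; auto. }
      destruct (HL p Lp) as [x [dx Ex]].
      rewrite <- Epq. rewrite Ex at 1. rewrite mul_assoc; auto. rewrite Eq. auto.
Qed.

End Semi.

Section Hom.
Variables (X Y : Type) (opX : X -> X -> option X) (opY : Y -> Y -> option Y) (h : X -> Y).
Hypothesis Hh : forall x y u, opX x y = Some u -> opY (h x) (h y) = Some (h u).

Definition img (p : UF X) : UF Y := fun B => p (fun x => B (h x)).

Lemma img_ultra p : ultrafilter X p -> ultrafilter Y (img p).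
Proof.
  intros (H1&H2&H3&H4&H5). unfold img. split; [|split; [|split; [|split]]]; auto.
  - intros A B HA HAB. apply (H3 _ _ HA). auto.
Qed.

Lemma img_mul p q : deltaS X opX p -> deltaS X opX q ->
  img (uf_mul X opX p q) = uf_mul Y opY (img p) (img q).
Proof.
  intros Hp Hq. apply functional_extensionality; intro A.
  apply propositional_extensionality. unfold img, uf_mul.
  apply uf_ext_iff. apply d_ultra in Hp; auto. intros x.
  apply (d_local X opX q x); auto. intros t Ht. unfold phiS in Ht.
  destruct (opX x t) as [u|] eqn:E; [|congruence].
  pose proof (Hh _ _ _ E) as E'. unfold sinv. rewrite E, E'. split.
  - intros [u' [Eu Au]]. inversion Eu; subst; eauto.
  - intros [u' [Eu Au]]. inversion Eu; subst; eauto.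
Qed.

End Hom.
From Stdlib Require Import Permutation Mergesort.

Section AC.
Variable S : Type.
Variable op : S -> S -> option S.
Variable Has : ps_assoc S op.
Variable Hc : ps_comm S op.

Local Notation oo := (oopX S op).

Lemma oo_assoc a b c : oo (oo a b) c = oo a (oo b c).
Proof. apply oopX_assoc; auto. Qed.

Lemma oo_comm a b : oo a b = oo b a.
Proof. destruct a, b; simpl; auto. Qed.

Inductive aexp := AV (n : nat) | AO (a b : aexp).

Fixpoint aeval (env : list (option S)) (e : aexp) : option S :=
  match e with AV n => nth n env None | AO a b => oo (aeval env a) (aeval env b) end.

Fixpoint aflat (e : aexp) : list nat :=
  match e with AV n => [n] | AO a b => aflat a ++ aflat b end.

Fixpoint levr (env : list (option S)) (l : list nat) : option S :=
  match l with
  | [] => None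
  | n :: l' => match l' with [] => nth n env None | _ => oo (nth n env None) (levr env l') end
  end.

Lemma levr_app env l1 l2 : l1 <> [] -> l2 <> [] ->
  levr env (l1 ++ l2) = oo (levr env l1) (levr env l2).
Proof.
  intros H1 H2. induction l1 as [|n l1 IH]; [congruence|].
  destruct l1 as [|m l1'].
  - simpl. destruct l2; [congruence|]. reflexivity.
  - change (oo (nth n env None) (levr env ((m :: l1') ++ l2)) =
            oo (oo (nth n env None) (levr env (m :: l1'))) (levr env l2)).
    rewrite IH by congruence. rewrite oo_assoc. reflexivity.
Qed.

Lemma aflat_ne e : aflat e <> [].
Proof. induction e; simpl; [congruence|]. destruct (aflat e1); simpl; congruence. Qed.

Lemma aeval_flat env e : aeval env e = levr env (aflat e).
Proof.
  induction e; simpl; auto. rewrite levr_app by apply aflat_ne. congruence.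
Qed.

Lemma levr_perm env l1 l2 : Permutation l1 l2 -> levr env l1 = levr env l2.
Proof.
  induction 1.
  - auto.
  - simpl. destruct l, l'; auto.
    + apply Permutation_nil_cons in H; contradiction.
    + apply Permutation_sym, Permutation_nil_cons in H; contradiction.
    + congruence.
  - simpl. destruct l.
    + apply oo_comm.
    + rewrite <- !oo_assoc. rewrite (oo_comm (nth y env None)). reflexivity.
  - congruence.
Qed.

Lemma ac_sound env e1 e2 :
  NatSort.sort (aflat e1) = NatSort.sort (aflat e2) -> aeval env e1 = aeval env e2.
Proof.
  intros H. rewrite !aeval_flat.
  rewrite (levr_perm env _ _ (NatSort.Permuted_sort (aflat e1))).
  rewrite (levr_perm env _ _ (NatSort.Permuted_sort (aflat e2))). congruence.
Qed.

Lemma oo_def_l a b : oo a b <> None -> a <> None.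
Proof. destruct a; simpl; congruence. Qed.
Lemma oo_def_r a b : oo a b <> None -> b <> None.
Proof. destruct a, b; simpl; congruence. Qed.

End AC.

Ltac ac_idx t env := lazymatch env with
  | t :: _ => constr:(O)
  | _ :: ?r => let n := ac_idx t r in constr:(S n) end.
Ltac ac_add t env := lazymatch env with
  | [] => constr:([t])
  | t :: _ => env
  | ?h :: ?r => let r' := ac_add t r in constr:(h :: r') end.
Ltac ac_gath t env := lazymatch t with
  | oopX _ _ ?a ?b => let e1 := ac_gath a env in ac_gath b e1
  | _ => ac_add t env end.
Ltac ac_reif t env := lazymatch t with
  | oopX _ _ ?a ?b => let ra := ac_reif a env in let rb := ac_reif b env in constr:(AO ra rb)
  | _ => let n := ac_idx t env in constr:(AV n) end.
Ltac ac_eq HA HC := lazymatch goal with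
  | |- @eq (option ?T) ?l ?r =>
    let e0 := constr:(@nil (option T)) in
    let e1 := ac_gath l e0 in let e2 := ac_gath r e1 in
    let rl := ac_reif l e2 in let rr := ac_reif r e2 in
    let tHA := type of HA in
    lazymatch tHA with ps_assoc ?S ?op =>
    change (aeval S op e2 rl = aeval S op e2 rr) end;
    apply (ac_sound _ _ HA HC); vm_compute; reflexivity
  end.

Section Tup.
Variable S : Type.
Variable op : S -> S -> option S.
Variable Has : ps_assoc S op.
Variable s0 : S.
Variable l : nat.

Definition opT (x y : nat -> S) : option (nat -> S) :=
  if excluded_middle_informative (forall i, i < l -> op (x i) (y i) <> None) then
    Some (fun i => if i <? l then match op (x i) (y i) with Some z => z | None => x i end else x i)
  else None.

Lemma opT_some x y z : opT x y = Some z <->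
  (forall i, i < l -> op (x i) (y i) = Some (z i)) /\ (forall i, l <= i -> z i = x i).
Proof.
  unfold opT. destruct (excluded_middle_informative _) as [H|H]; split.
  - intros E. inversion E; subst; clear E. split.
    + intros i Hi. destruct (Nat.ltb_spec i l); [|lia].
      destruct (op (x i) (y i)) eqn:E; auto. exfalso; apply (H i Hi); auto.
    + intros i Hi. destruct (Nat.ltb_spec i l); [lia|auto].
  - intros [H1 H2]. f_equal. apply functional_extensionality; intro i.
    destruct (Nat.ltb_spec i l).
    + rewrite H1; auto.
    + rewrite H2; auto.
  - discriminate.
  - intros [H1 H2]. exfalso. apply H. intros i Hi. rewrite H1; auto. discriminate.
Qed.

Lemma opT_def x y : opT x y <> None <-> forall i, i < l -> op (x i) (y i) <> None.
Proof.
  unfold opT. destruct (excluded_middle_informative _) as [H|H]; split; auto; try congruence;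
  intros H'; contradiction.
Qed.

Lemma opT_ext a b c d : (forall i, i < l -> op (a i) (b i) = op (c i) (d i)) ->
  (forall i, l <= i -> a i = c i) -> opT a b = opT c d.
Proof.
  intros H1 H2. unfold opT.
  destruct (excluded_middle_informative (forall i, i < l -> op (a i) (b i) <> None)) as [Ha|Ha];
  destruct (excluded_middle_informative (forall i, i < l -> op (c i) (d i) <> None)) as [Hc|Hc].
  - f_equal. apply functional_extensionality; intro i. destruct (Nat.ltb_spec i l).
    + rewrite H1 by auto. destruct (op (c i) (d i)) eqn:E; auto. exfalso; apply (Hc i); auto.
    + apply H2; auto.
  - exfalso. apply Hc. intros i Hi. rewrite <- H1; auto.
  - exfalso. apply Ha. intros i Hi. rewrite H1; auto.
  - auto.
Qed.

Lemma opT_coord x y z i : opT x y = Some z -> i < l -> op (x i) (y i) = Some (z i).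
Proof. intros E Hi. apply opT_some in E. apply E; auto. Qed.

Lemma opT_beyond x y z i : opT x y = Some z -> l <= i -> z i = x i.
Proof. intros E Hi. apply opT_some in E. apply E; auto. Qed.

Lemma opT_assoc : ps_assoc (nat -> S) opT.
Proof.
  assert (Ha : forall a b c, oopX S op (op a b) (Some c) = oopX S op (Some a) (op b c)).
  { intros a b c. apply (Has a b c). }
  intros x y z.
  destruct (opT x y) as [xy|] eqn:Exy; destruct (opT y z) as [yz|] eqn:Eyz.
  - apply opT_ext.
    + intros i Hi. specialize (Ha (x i) (y i) (z i)).
      rewrite (opT_coord _ _ _ i Exy Hi), (opT_coord _ _ _ i Eyz Hi) in Ha. exact Ha.
    + intros i Hi. apply (opT_beyond _ _ _ i Exy Hi).
  - destruct (opT xy z) as [w|] eqn:E; auto. exfalso.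
    assert (N : opT y z <> None).
    { apply opT_def. intros i Hi N. specialize (Ha (x i) (y i) (z i)).
      rewrite (opT_coord _ _ _ i Exy Hi), N in Ha. simpl in Ha.
      rewrite (opT_coord _ _ _ i E Hi) in Ha. discriminate. }
    congruence.
  - destruct (opT x yz) as [w|] eqn:E; auto. exfalso.
    assert (N : opT x y <> None).
    { apply opT_def. intros i Hi N. specialize (Ha (x i) (y i) (z i)).
      rewrite (opT_coord _ _ _ i Eyz Hi), N in Ha. simpl in Ha.
      rewrite (opT_coord _ _ _ i E Hi) in Ha. discriminate. }
    congruence.
  - auto.
Qed.

Definition diag (c : S) : nat -> S := fun i => if i <? l then c else s0.

Lemma diag_hom c d e : op c d = Some e -> opT (diag c) (diag d) = Some (diag e).
Proof.
  intros E. apply opT_some. split.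
  - intros i Hi. unfold diag. destruct (Nat.ltb_spec i l); [auto|lia].
  - intros i Hi. unfold diag. destruct (Nat.ltb_spec i l); [lia|auto].
Qed.

Lemma diag_lt c i : i < l -> diag c i = c.
Proof. intros Hi. unfold diag. destruct (Nat.ltb_spec i l); [auto|lia]. Qed.

Lemma proj_hom i : i < l -> forall x y u, opT x y = Some u -> op (x i) (y i) = Some (u i).
Proof. intros Hi x y u E. apply (opT_coord _ _ _ i E Hi). Qed.

End Tup.
Lemma uf_forall_list {X T : Type} (p : UF X) (L : list T) (R : T -> X -> Prop) :
  ultrafilter X p -> (forall f, In f L -> p (R f)) -> p (fun t => forall f, In f L -> R f t).
Proof.
  intros Hp. induction L as [|f L IH]; intros H.
  - apply (uf_mono p (fun _ => True)); auto. apply uf_true; auto. intros t _ f [].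
  - apply (uf_mono p (fun t => R f t /\ forall f, In f L -> R f t)); auto.
    apply uf_and; auto. apply H; left; auto. apply IH. intros; apply H; right; auto.
    intros t [H1 H2] g [<-|Hg]; auto.
Qed.

Lemma uf_forall_lt {X : Type} (p : UF X) (n : nat) (R : nat -> X -> Prop) :
  ultrafilter X p -> (forall i, i < n -> p (R i)) -> p (fun t => forall i, i < n -> R i t).
Proof.
  intros Hp. induction n as [|n IH]; intros H.
  - apply (uf_mono p (fun _ => True)); auto. apply uf_true; auto. intros t _ i Hi; lia.
  - apply (uf_mono p (fun t => R n t /\ forall i, i < n -> R i t)); auto.
    apply uf_and; auto.
    intros t [H1 H2] i Hi. destruct (Nat.eq_dec i n); subst; auto. apply H2; lia.
Qed.

Section Main.
Variable S : Type.
Variable op : S -> S -> option S.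
Variable Has : ps_assoc S op.
Variable Hc : ps_comm S op.

Local Notation oo := (oopX S op).

Lemma oo_Some a b : oo (Some a) (Some b) = op a b.
Proof. reflexivity. Qed.

Definition gt (o : option S) (d : S) : S := match o with Some v => v | None => d end.

Lemma lprod_cons x l0 : l0 <> [] -> lprod S op (x :: l0) = oo (Some x) (lprod S op l0).
Proof. intros H. destruct l0; [congruence|]. simpl. destruct (lprod S op (s :: l0)); reflexivity. Qed.

Lemma lprod_app l1 l2 : l1 <> [] -> l2 <> [] ->
  lprod S op (l1 ++ l2) = oo (lprod S op l1) (lprod S op l2).
Proof.
  intros H1 H2. induction l1 as [|x l1 IH]; [congruence|].
  destruct l1 as [|y l1].
  - simpl app. rewrite lprod_cons; auto.
  - change ((x :: y :: l1) ++ l2) with (x :: ((y :: l1) ++ l2)).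
    rewrite lprod_cons by (simpl; congruence). rewrite IH by congruence.
    rewrite (lprod_cons x (y :: l1)) by congruence. rewrite oo_assoc; auto.
Qed.

Lemma seqprod_app f H1 H2 : H1 <> [] -> H2 <> [] ->
  seqprod S op f (H1 ++ H2) = oo (seqprod S op f H1) (seqprod S op f H2).
Proof.
  intros N1 N2. unfold seqprod. rewrite map_app. apply lprod_app.
  destruct H1; simpl; congruence. destruct H2; simpl; congruence.
Qed.

Lemma seqprod_single f n : seqprod S op f [n] = Some (f n).
Proof. reflexivity. Qed.


Lemma assoc_eq x y z xy yz : op x y = Some xy -> op y z = Some yz -> op xy z = op x yz.
Proof. intros E1 E2. pose proof (Has x y z) as H. rewrite E1, E2 in H. exact H. Qed.

Lemma Jset_left p q : deltaS S op p -> Jdelta S op q ->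
  forall A, uf_mul S op p q A -> Jdelta_set S op A.
Proof.
  intros Hp [Hq HqJ] A HA F HF Fad W HW.
  pose proof (d_ultra _ _ p Hp) as Hpu.
  destruct (uf_nonempty p _ Hpu (uf_and p _ _ Hpu HA (d_sigma _ _ p W Hp))) as [s [Hs1 Hs2]].
  set (W' := s :: map (fun w => gt (op w s) s) W).
  destruct (HqJ _ Hs1 F HF Fad W' ltac:(discriminate)) as [a [Ha [H [HH Hf]]]].
  assert (Hsa : op s a <> None) by (apply Ha; left; auto).
  destruct (op s a) as [a'|] eqn:Esa; [|congruence].
  assert (HWs : forall w, In w W -> exists ws, op w s = Some ws /\ In ws W').
  { intros w Hw. specialize (Hs2 w Hw). unfold phiS in Hs2.
    destruct (op w s) as [ws|] eqn:Ews; [|congruence]. exists ws. split; auto.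
    right. apply in_map_iff. exists w. rewrite Ews. auto. }
  exists a'. split.
  - intros w Hw. destruct (HWs w Hw) as [ws [Ews Hws]]. unfold phiS.
    rewrite <- (assoc_eq w s a ws a'); auto. apply Ha; auto.
  - exists H. split; auto. intros f Hf'. destruct (Hf f Hf') as [v [Ev [Hsv [u [Eu Bu]]]]].
    exists v. split; auto. split.
    + intros w y Hw Ewy. destruct (HWs w Hw) as [ws [Ews Hws]].
      apply (Hsv ws y Hws). rewrite (assoc_eq w s a ws a'); auto.
    + destruct Bu as [u' [Eu' Au']]. exists u'. split; auto.
      rewrite (assoc_eq s a v a' u); auto.
Qed.

Lemma Jset_right p q : deltaS S op p -> Jdelta S op q ->
  forall A, uf_mul S op q p A -> Jdelta_set S op A.
Proof.
  intros Hp [Hq HqJ] A HA F HF Fad W HW.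
  pose proof (d_ultra _ _ p Hp) as Hpu.
  destruct (HqJ _ HA F HF Fad W HW) as [a [Ha [H [HH Hf]]]].
  set (R := fun f t => exists v u, seqprod S op f H = Some v /\ sigma_Wa S op W a v /\
              op a v = Some u /\ sinv S op u A t /\
              forall w y, In w W -> op w u = Some y -> phiS S op y t).
  assert (HR : p (fun t => forall f, In f F -> R f t)).
  { apply uf_forall_list; auto. intros f Hf'.
    destruct (Hf f Hf') as [v [Ev [Hsv [u [Eu Pu]]]]].
    apply (uf_mono p _ _ Hpu (uf_and p _ _ Hpu Pu (d_sigma _ _ p (map (fun w => gt (op w u) u) W) Hp))).
    intros t [H1 H2]. exists v, u. split; auto. split; auto. split; auto. split; auto.
    intros w y Hw Ewy. apply H2. apply in_map_iff. exists w. rewrite Ewy. auto. }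
  destruct (uf_nonempty p _ Hpu HR) as [t Ht].
  destruct F as [|f0 F']; [congruence|].
  destruct (Ht f0 (or_introl eq_refl)) as [v0 [u0 [Ev0 [Hsv0 [Eu0 [[z0 [Ez0 Az0]] Hw0]]]]]].
  assert (Eta : oo (Some t) (Some a) <> None).
  { assert (E : oo (oo (Some a) (Some v0)) (Some t) = oo (oo (Some t) (Some a)) (Some v0)) by ac_eq Has Hc.
    apply (oo_def_l S op _ (Some v0)). rewrite <- E. rewrite oo_Some, Eu0. simpl. congruence. }
  rewrite oo_Some in Eta. destruct (op t a) as [a'|] eqn:Eta'; [|congruence]. clear Eta.
  assert (Key : forall v u w, sigma_Wa S op W a v -> op a v = Some u -> In w W ->
             (forall w y, In w W -> op w u = Some y -> phiS S op y t) ->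
             oo (oo (Some w) (Some a')) (Some v) <> None).
  { intros v u w Hsv Eu Hw Hwu.
    assert (Hwa : op w a <> None) by (apply Ha; auto).
    destruct (op w a) as [wa|] eqn:Ewa; [|congruence].
    assert (Hwav : op wa v <> None) by (apply (Hsv w wa); auto).
    rewrite (assoc_eq w a v wa u) in Hwav; auto.
    destruct (op w u) as [y|] eqn:Ewu; [|congruence].
    specialize (Hwu w y Hw Ewu). unfold phiS in Hwu.
    assert (E : oo (oo (Some w) (oo (Some a) (Some v))) (Some t) =
                oo (oo (Some w) (oo (Some t) (Some a))) (Some v)) by ac_eq Has Hc.
    rewrite (oo_Some t a), Eta', (oo_Some a v), Eu in E. rewrite <- E. simpl. rewrite Ewu. auto. }
  exists a'. split.
  - intros w Hw. unfold phiS. pose proof (Key v0 u0 w Hsv0 Eu0 Hw Hw0) as K.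
    apply oo_def_l in K. exact K.
  - exists H. split; auto. intros f Hf'.
    destruct (Ht f Hf') as [v [u [Ev [Hsv [Eu [[z [Ez Az]] Hwu]]]]]].
    exists v. split; auto. split.
    + intros w y Hw Ewy. pose proof (Key v u w Hsv Eu Hw Hwu) as K.
      rewrite oo_Some, Ewy in K. exact K.
    + exists z. split; auto.
      assert (E : oo (oo (Some t) (Some a)) (Some v) = oo (oo (Some a) (Some v)) (Some t)) by ac_eq Has Hc.
      rewrite (oo_Some t a), Eta', (oo_Some a v), Eu in E. rewrite oo_Some in E. rewrite E. exact Ez.
Qed.

End Main.
Lemma sorted_app_lt (H1 H2 : list nat) : Sorted lt H1 -> Sorted lt H2 ->
  (forall x y, In x H1 -> In y H2 -> x < y) -> Sorted lt (H1 ++ H2).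
Proof.
  intros S1 S2 Hlt. induction H1 as [|x H1 IH]; simpl; auto.
  inversion S1; subst. constructor.
  - apply IH; auto. intros a b Ha Hb. apply Hlt; simpl; auto.
  - destruct H1 as [|x' H1']; simpl.
    + destruct H2 as [|y H2']; constructor. apply Hlt; simpl; auto.
    + inversion H4; subst. constructor; auto.
Qed.

Lemma sorted_hd_le (H : list nat) : Sorted lt H -> forall y, In y H -> hd 0 H <= y.
Proof.
  intros SH y Hy. destruct H as [|x H]; [destruct Hy|]. simpl.
  destruct Hy as [->|Hy]; auto.
  pose proof (Sorted_extends (fun a b c => Nat.lt_trans a b c) SH) as Hf.
  rewrite Forall_forall in Hf. specialize (Hf y Hy). lia.
Qed.

Ltac to_oo H := lazymatch type of H with
  | ?op ?a ?b = ?c => change (oopX _ op (Some a) (Some b) = c) in H end.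

Section Exist.
Variable S : Type.
Variable op : S -> S -> option S.
Variable Has : ps_assoc S op.
Variable Hc : ps_comm S op.
Variable Hadeq : ps_adequate S op.
Variable s0 : S.
Variable F : list (nat -> S).
Variable W : list S.
Variable HF : F <> [].
Variable HW : W <> [].
Variable Fad : forall f, In f F -> adequate_seq S op f.

Local Notation oo := (oopX S op).
Local Notation l := (length F).
Local Notation Xt := (nat -> S).
Local Notation opt := (opT S op l).

Definition fi (i : nat) : nat -> S := nth i F (fun _ => s0).

Lemma l_pos : 0 < l.
Proof. destruct F; simpl; [congruence|lia]. Qed.

Definition Idef (m : nat) (x : Xt) : Prop :=
  exists a H, sigmaS S op W a /\ finset_nat H /\ m <= hd 0 H /\
    forall i, i < l -> exists v, seqprod S op (fi i) H = Some v /\ sigma_Wa S op W a v /\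
      op a v = Some (x i).

Definition Ddef (x : Xt) : Prop := exists c, sigmaS S op W c /\ forall i, i < l -> x i = c.

Definition Edef (m : nat) (x : Xt) : Prop := Ddef x \/ Idef m x.

Definition mkw (x : Xt) (w : S) : Xt := fun i => gt S (op w (x i)) (x i).

Definition ZZ (x : Xt) : list Xt := x :: map (mkw x) W.

Lemma Zinfo x y : sigmaS Xt opt (ZZ x) y ->
  opt x y <> None /\ forall w, In w W -> forall i, i < l -> op (mkw x w i) (y i) <> None.
Proof.
  intros H. split.
  - apply (H x). left; auto.
  - intros w Hw i Hi. assert (N : opt (mkw x w) y <> None).
    { apply (H (mkw x w)). right. apply in_map; auto. }
    exact (proj1 (opT_def S op l _ _) N i Hi).
Qed.

Lemma mkw_eq x w i t : op w (x i) = Some t -> mkw x w i = t.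
Proof. intros E. unfold mkw. rewrite E. reflexivity. Qed.

Lemma Idef_mono m m' x : m <= m' -> Idef m' x -> Idef m x.
Proof. intros Hm [a [H [H1 [H2 [H3 H4]]]]]. exists a, H. split; [auto|split; [auto|split; [lia|auto]]]. Qed.


Lemma def_l (e1 e2 r : option S) : e1 = oo e2 r -> e1 <> None -> e2 <> None.
Proof. intros -> H. apply (oo_def_l S op _ r); auto. Qed.

Lemma def_eq (e1 e2 : option S) : e1 = e2 -> e1 <> None -> e2 <> None.
Proof. intros -> H; auto. Qed.

Lemma KL_I m x : Idef m x -> exists m', forall y, Edef m' y -> sigmaS Xt opt (ZZ x) y ->
  exists z, opt x y = Some z /\ Idef m z.
Proof.
  intros [a [H [Ha [HH [Hm Hv]]]]].
  exists (Nat.succ (list_max H)). intros y Ey HZ.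
  destruct (Zinfo x y HZ) as [Dxy Hwy].
  destruct (opt x y) as [z|] eqn:Ez; [|congruence]. exists z. split; auto.
  assert (Exy : forall i, i < l -> op (x i) (y i) = Some (z i)).
  { intros i Hi. apply (opT_coord S op l _ _ _ i Ez Hi). }
  assert (KW : forall w i v, In w W -> i < l -> sigma_Wa S op W a v -> op a v = Some (x i) ->
     oo (oo (Some w) (oo (Some a) (Some v))) (Some (y i)) <> None).
  { intros w i v Hw Hi Hsv Exi.
    assert (Hwa : op w a <> None) by (apply Ha; auto).
    destruct (op w a) as [wa|] eqn:Ewa; [|congruence].
    assert (Hwav : op wa v <> None) by (apply (Hsv w wa); auto).
    destruct (op wa v) as [t|] eqn:Et; [|congruence].
    assert (Ewx : op w (x i) = Some t).
    { rewrite <- (assoc_eq S op Has w a v wa (x i)); auto. }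
    to_oo Exi. rewrite Exi. pose proof (Hwy w Hw i Hi) as K.
    rewrite (mkw_eq x w i t Ewx) in K. to_oo Ewx. rewrite Ewx. exact K. }
  destruct HH as [HHne HHs].
  destruct Ey as [[d [Hd Hyd]] | [b [H' [Hb [[HH'ne HH's] [Hm' Hv']]]]]].
  - destruct (Hv 0 l_pos) as [v0 [Ev0 [Hs0 Ex0]]].
    pose proof (Exy 0 l_pos) as Ez0. rewrite (Hyd 0 l_pos) in Ez0. to_oo Ez0. to_oo Ex0.
    assert (Had : oo (Some a) (Some d) <> None).
    { apply (def_l (oo (oo (Some a) (Some v0)) (Some d)) _ (Some v0)). ac_eq Has Hc.
      rewrite Ex0, Ez0. discriminate. }
    rewrite oo_Some in Had. destruct (op a d) as [ad|] eqn:Ead; [|congruence]. clear Had. to_oo Ead.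
    exists ad, H. split; [|split; [split; auto|split; [auto|]]].
    + intros w Hw. unfold phiS. change (oo (Some w) (Some ad) <> None). rewrite <- Ead.
      apply (def_l (oo (oo (Some w) (oo (Some a) (Some v0))) (Some d)) _ (Some v0)). ac_eq Has Hc.
      pose proof (KW w 0 v0 Hw l_pos Hs0 Ex0) as K. rewrite (Hyd 0 l_pos) in K. exact K.
    + intros i Hi. destruct (Hv i Hi) as [v [Ev [Hsv Exi]]]. exists v. split; auto. split.
      * intros w t Hw Ewt. unfold phiS. change (oo (Some t) (Some v) <> None). to_oo Ewt.
        rewrite <- Ewt, <- Ead.
        apply (def_eq (oo (oo (Some w) (oo (Some a) (Some v))) (Some d))). ac_eq Has Hc.
        pose proof (KW w i v Hw Hi Hsv Exi) as K. rewrite (Hyd i Hi) in K. exact K.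
      * change (oo (Some ad) (Some v) = Some (z i)). rewrite <- Ead.
        pose proof (Exy i Hi) as Ezi. rewrite (Hyd i Hi) in Ezi. to_oo Ezi. to_oo Exi.
        rewrite <- Ezi, <- Exi. ac_eq Has Hc.
  - destruct (Hv 0 l_pos) as [v0 [Ev0 [Hs0 Ex0]]].
    destruct (Hv' 0 l_pos) as [v0' [Ev0' [Hs0' Ey0]]].
    pose proof (Exy 0 l_pos) as Ez0. to_oo Ez0. to_oo Ex0. to_oo Ey0.
    assert (Hab : oo (Some a) (Some b) <> None).
    { apply (def_l (oo (oo (Some a) (Some v0)) (oo (Some b) (Some v0'))) _ (oo (Some v0) (Some v0'))).
      ac_eq Has Hc. rewrite Ex0, Ey0, Ez0. discriminate. }
    rewrite oo_Some in Hab. destruct (op a b) as [ab|] eqn:Eab; [|congruence]. clear Hab. to_oo Eab.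
    exists ab, (H ++ H'). split; [|split; [|split]].
    + intros w Hw. unfold phiS. change (oo (Some w) (Some ab) <> None). rewrite <- Eab.
      apply (def_l (oo (oo (Some w) (oo (Some a) (Some v0))) (oo (Some b) (Some v0'))) _
                   (oo (Some v0) (Some v0'))). ac_eq Has Hc.
      pose proof (KW w 0 v0 Hw l_pos Hs0 Ex0) as K. rewrite <- Ey0 in K. exact K.
    + split.
      * destruct H; [congruence|]. simpl; congruence.
      * apply sorted_app_lt; auto. intros p q Hp Hq.
        assert (p <= list_max H).
        { pose proof (proj1 (list_max_le H (list_max H)) (le_n _)) as Hf.
          rewrite Forall_forall in Hf. auto. }
        pose proof (sorted_hd_le H' HH's q Hq). eapply Nat.le_lt_trans; [eassumption|]. eapply Nat.lt_le_trans; [exact Hm'|assumption].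
    + destruct H as [|h H0]; [congruence|]. simpl. simpl in Hm. exact Hm.
    + intros i Hi. destruct (Hv i Hi) as [v [Ev [Hsv Exi]]].
      destruct (Hv' i Hi) as [v' [Ev' [Hsv' Eyi]]].
      pose proof (Exy i Hi) as Ezi. to_oo Ezi. to_oo Exi. to_oo Eyi.
      assert (Hvv : oo (Some v) (Some v') <> None).
      { apply (def_l (oo (oo (Some a) (Some v)) (oo (Some b) (Some v'))) _ (oo (Some a) (Some b))).
        ac_eq Has Hc. rewrite Exi, Eyi, Ezi. discriminate. }
      rewrite oo_Some in Hvv. destruct (op v v') as [vv|] eqn:Evv; [|congruence]. clear Hvv. to_oo Evv.
      exists vv. split; [|split].
      * rewrite seqprod_app; auto. rewrite Ev, Ev'. exact Evv.
      * intros w t Hw Ewt. unfold phiS. change (oo (Some t) (Some vv) <> None). to_oo Ewt.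
        rewrite <- Ewt, <- Evv, <- Eab.
        apply (def_eq (oo (oo (Some w) (oo (Some a) (Some v))) (oo (Some b) (Some v')))). ac_eq Has Hc.
        pose proof (KW w i v Hw Hi Hsv Exi) as K. rewrite <- Eyi in K. exact K.
      * change (oo (Some ab) (Some vv) = Some (z i)). rewrite <- Eab, <- Evv, <- Ezi, <- Exi, <- Eyi.
        ac_eq Has Hc.
Qed.


Lemma KL_E m x : Edef m x -> exists m', forall y, Edef m' y -> sigmaS Xt opt (ZZ x) y ->
  exists z, opt x y = Some z /\ Edef m z /\ (Idef m' y -> Idef m z).
Proof.
  intros [[c [Hcs Hxc]]|Hx].
  - exists m. intros y Ey HZ.
    destruct (Zinfo x y HZ) as [Dxy Hwy].
    destruct (opt x y) as [z|] eqn:Ez; [|congruence]. exists z.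
    assert (Exy : forall i, i < l -> op c (y i) = Some (z i)).
    { intros i Hi. rewrite <- (Hxc i Hi). apply (opT_coord S op l _ _ _ i Ez Hi). }
    assert (KW : forall w i, In w W -> i < l -> oo (oo (Some w) (Some c)) (Some (y i)) <> None).
    { intros w i Hw Hi. assert (Hwc : op w c <> None) by (apply Hcs; auto).
      destruct (op w c) as [t|] eqn:Ewc; [|congruence].
      pose proof (Hwy w Hw i Hi) as K. rewrite (mkw_eq x w i t) in K by (rewrite Hxc; auto).
      to_oo Ewc. rewrite Ewc. exact K. }
    destruct (classic (Idef m y)) as [HI|HI].
    + assert (Iz : Idef m z).
      { destruct HI as [b [H' [Hb [HH' [Hm' Hv']]]]].
        destruct (Hv' 0 l_pos) as [v0' [Ev0' [Hs0' Ey0]]].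
        pose proof (Exy 0 l_pos) as Ez0. to_oo Ez0. to_oo Ey0.
        assert (Hcb : oo (Some c) (Some b) <> None).
        { apply (def_l (oo (Some c) (oo (Some b) (Some v0'))) _ (Some v0')).
          ac_eq Has Hc. rewrite Ey0, Ez0. discriminate. }
        rewrite oo_Some in Hcb. destruct (op c b) as [cb|] eqn:Ecb; [|congruence]. clear Hcb. to_oo Ecb.
        exists cb, H'. split; [|split; [auto|split; [auto|]]].
        - intros w Hw. unfold phiS. change (oo (Some w) (Some cb) <> None). rewrite <- Ecb.
          apply (def_l (oo (oo (Some w) (Some c)) (oo (Some b) (Some v0'))) _ (Some v0')). ac_eq Has Hc.
          pose proof (KW w 0 Hw l_pos) as K. rewrite <- Ey0 in K. exact K.
        - intros i Hi. destruct (Hv' i Hi) as [v [Ev [Hsv Eyi]]]. exists v. split; auto. split.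
          + intros w t Hw Ewt. unfold phiS. change (oo (Some t) (Some v) <> None). to_oo Ewt.
            rewrite <- Ewt, <- Ecb.
            apply (def_eq (oo (oo (Some w) (Some c)) (oo (Some b) (Some v)))). ac_eq Has Hc.
            pose proof (KW w i Hw Hi) as K. to_oo Eyi. rewrite <- Eyi in K. exact K.
          + change (oo (Some cb) (Some v) = Some (z i)). rewrite <- Ecb.
            pose proof (Exy i Hi) as Ezi. to_oo Ezi. to_oo Eyi.
            rewrite <- Ezi, <- Eyi. ac_eq Has Hc. }
      split; auto. split; auto. right; auto.
    + destruct Ey as [[d [Hd Hyd]]|Hy]; [|contradiction].
      split; auto. split; [|intros; contradiction].
      left. exists (z 0). split.
      * intros w Hw. unfold phiS. pose proof (KW w 0 Hw l_pos) as K.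
        pose proof (Exy 0 l_pos) as Ez0. to_oo Ez0.
        change (oo (Some w) (Some (z 0)) <> None). rewrite <- Ez0.
        apply (def_eq (oo (oo (Some w) (Some c)) (Some (y 0)))). ac_eq Has Hc. exact K.
      * intros i Hi. pose proof (Exy i Hi) as Ezi. pose proof (Exy 0 l_pos) as Ez0.
        rewrite (Hyd i Hi) in Ezi. rewrite (Hyd 0 l_pos) in Ez0. congruence.
  - destruct (KL_I m x Hx) as [m' Hm']. exists m'. intros y Ey HZ.
    destruct (Hm' y Ey HZ) as [z [Ez Iz]]. exists z. split; auto. split; auto. right; auto.
Qed.

Definition Tset (q : UF Xt) : Prop := deltaS Xt opt q /\ forall A, (exists m, A = Edef m) -> q A.
Definition Iset (q : UF Xt) : Prop :=
  deltaS Xt opt q /\ forall A, ((exists m, A = Edef m) \/ (exists m, A = Idef m)) -> q A.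

Local Notation mulT := (uf_mul Xt opt).
Local Notation HasT := (opT_assoc S op Has l).

Lemma T_semig : semig Xt opt Tset.
Proof.
  intros q r [Hq Hq'] [Hr Hr']. split. apply mul_delta; auto. exact HasT.
  intros A [m ->]. unfold uf_mul. pose proof (d_ultra _ _ q Hq) as Hqu.
  pose proof (d_ultra _ _ r Hr) as Hru.
  apply (uf_mono q _ _ Hqu (Hq' _ (ex_intro _ m eq_refl))). intros x Ex.
  destruct (KL_E m x Ex) as [m' Hm'].
  apply (uf_mono r _ _ Hru (uf_and r _ _ Hru (Hr' _ (ex_intro _ m' eq_refl)) (d_sigma _ _ r (ZZ x) Hr))).
  intros y [Ey HZ]. destruct (Hm' y Ey HZ) as [z [Ez [Ez' _]]]. exists z. auto.
Qed.

Lemma I_ideal t r : Tset t -> Iset r -> Iset (mulT t r) /\ Iset (mulT r t).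
Proof.
  intros [Ht Ht'] [Hr Hr'].
  pose proof (d_ultra _ _ t Ht) as Htu. pose proof (d_ultra _ _ r Hr) as Hru.
  assert (Tr : Tset r) by (split; auto).
  split; split; try (apply mul_delta; auto; exact HasT).
  - intros A [[m ->]|[m ->]].
    + apply (proj2 (T_semig t r (conj Ht Ht') Tr)). eauto.
    + unfold uf_mul. apply (uf_mono t _ _ Htu (Ht' _ (ex_intro _ m eq_refl))). intros x Ex.
      destruct (KL_E m x Ex) as [m' Hm'].
      apply (uf_mono r _ _ Hru (uf_and r _ _ Hru (Hr' _ (or_intror (ex_intro _ m' eq_refl))) (d_sigma _ _ r (ZZ x) Hr))).
      intros y [Iy HZ]. destruct (Hm' y (or_intror Iy) HZ) as [z [Ez [_ Hz]]]. exists z. auto.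
  - intros A [[m ->]|[m ->]].
    + apply (proj2 (T_semig r t Tr (conj Ht Ht'))). eauto.
    + unfold uf_mul. apply (uf_mono r _ _ Hru (Hr' _ (or_intror (ex_intro _ m eq_refl)))). intros x Ix.
      destruct (KL_I m x Ix) as [m' Hm'].
      apply (uf_mono t _ _ Htu (uf_and t _ _ Htu (Ht' _ (ex_intro _ m' eq_refl)) (d_sigma _ _ t (ZZ x) Ht))).
      intros y [Ey HZ]. destruct (Hm' y Ey HZ) as [z [Ez Hz]]. exists z. auto.
Qed.


Lemma IZ m (Z : list Xt) : exists x, Idef m x /\ sigmaS Xt opt Z x.
Proof.
  set (coords := flat_map (fun z => map z (seq 0 l)) Z).
  destruct (Hadeq (W ++ coords)) as [a Ha].
  { destruct W; [congruence|]. simpl. discriminate. }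
  set (K := a :: map (fun w => gt S (op w a) a) (W ++ coords)).
  assert (HK : forall w t, In w (W ++ coords) -> op w a = Some t -> In t K).
  { intros w t Hw E. right. apply in_map_iff. exists w. rewrite E. auto. }
  assert (HN : forall n, exists N, forall i, i < n -> i < l -> forall H, finset_nat H -> N <= hd 0 H ->
            forall v, seqprod S op (fi i) H = Some v -> sigmaS S op K v).
  { induction n as [|n [N HNn]].
    - exists 0. intros i Hi. inversion Hi.
    - destruct (Nat.lt_ge_cases n l) as [Hnl|Hnl].
      + assert (Hin : In (fi n) F) by (apply nth_In; auto).
        destruct (proj2 (Fad _ Hin) K ltac:(discriminate)) as [mn Hmn].
        exists (Nat.max N mn). intros i Hi Hil H HH HNH v Ev.
        destruct (Nat.eq_dec i n) as [->|Hne].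
        * apply (Hmn H HH); auto. eapply Nat.le_trans; [apply Nat.le_max_r|exact HNH].
        * assert (Hin' : i < n) by (apply Nat.lt_succ_r in Hi; lia).
          apply (HNn i Hin' Hil H HH); [eapply Nat.le_trans; [apply Nat.le_max_l|exact HNH]|exact Ev].
      + exists N. intros i Hi Hil. apply HNn; auto. eapply Nat.lt_le_trans; eauto. }
  destruct (HN l) as [N HNl].
  set (n0 := Nat.max m N).
  assert (Hfin : finset_nat [n0]) by (split; [discriminate|repeat constructor]).
  assert (HvK : forall i, i < l -> sigmaS S op K (fi i n0)).
  { intros i Hi. apply (HNl i Hi Hi [n0] Hfin); [apply Nat.le_max_r|reflexivity]. }
  assert (Hav : forall i, i < l -> op a (fi i n0) = Some (gt S (op a (fi i n0)) a)).
  { intros i Hi. assert (N0 : op a (fi i n0) <> None) by (apply (HvK i Hi); left; auto).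
    destruct (op a (fi i n0)); [auto|congruence]. }
  exists (fun i => gt S (op a (fi i n0)) a). split.
  - exists a, [n0]. split; [|split; [auto|split; [apply Nat.le_max_l|]]].
    + intros w Hw. apply Ha. apply in_or_app; left; auto.
    + intros i Hi. exists (fi i n0). split; [reflexivity|split; [|apply Hav; auto]].
      intros w t Hw Ewt. apply (HvK i Hi). apply (HK w); auto. apply in_or_app; left; auto.
  - intros z Hz. unfold phiS. apply (opT_def S op l). intros i Hi.
    assert (Hzi : In (z i) coords).
    { apply in_flat_map. exists z. split; auto. apply in_map. apply in_seq. split; [apply Nat.le_0_l|exact Hi]. }
    assert (Hza : op (z i) a <> None) by (apply Ha; apply in_or_app; right; auto).
    destruct (op (z i) a) as [t|] eqn:Et; [|congruence].
    rewrite <- (assoc_eq S op Has (z i) a (fi i n0) t); auto.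
    apply (HvK i Hi). apply (HK (z i)); auto. apply in_or_app; right; auto.
Qed.

Lemma J_from_min p A : deltaS S op p -> uf_mul S op p p = p ->
  (forall q, deltaS S op q -> uf_mul S op q q = q -> uf_mul S op p q = q -> uf_mul S op q p = q -> q = p) ->
  p A ->
  exists a, sigmaS S op W a /\ exists H, finset_nat H /\ forall f, In f F ->
    exists v, seqprod S op f H = Some v /\ sigma_Wa S op W a v /\ exists u, op a v = Some u /\ A u.
Proof.
  intros Hp Epp Hmin HA.
  pose proof (d_ultra _ _ p Hp) as Hpu.
  set (e := img S Xt (diag S s0 l) p).
  assert (Hdh : forall x y u, op x y = Some u -> opt (diag S s0 l x) (diag S s0 l y) = Some (diag S s0 l u)).
  { intros x y u E. apply diag_hom; auto. }
  assert (de : deltaS Xt opt e).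
  { split. apply img_ultra; auto. intros y. unfold e, img.
    apply (uf_mono p _ _ Hpu (d_sigma _ _ p (map y (seq 0 l)) Hp)). intros c Hc'.
    unfold phiS. apply (opT_def S op l). intros i Hi. rewrite diag_lt; auto.
    apply Hc'. apply in_map. apply in_seq. split; [apply Nat.le_0_l|exact Hi]. }
  assert (Ee : uf_mul Xt opt e e = e).
  { unfold e. rewrite <- (img_mul S Xt op opt (diag S s0 l) Hdh p p Hp Hp). rewrite Epp. auto. }
  assert (Te : Tset e).
  { split; auto. intros B [m ->]. unfold e, img.
    apply (uf_mono p _ _ Hpu (d_sigma _ _ p W Hp)). intros c Hc'. left. exists c. split; auto.
    intros i Hi. apply diag_lt; auto. }
  set (G := fun B : Xt -> Prop => exists m Z, forall x, Idef m x -> sigmaS Xt opt Z x -> B x).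
  assert (HG : is_filter Xt G).
  { split; [|split; [|split]].
    - intros [m [Z HZ]]. destruct (IZ m Z) as [x [Hx1 Hx2]]. exact (HZ x Hx1 Hx2).
    - exists 0, []. auto.
    - intros B1 B2 [m [Z HZ]] H12. exists m, Z. auto.
    - intros B1 B2 [m1 [Z1 HZ1]] [m2 [Z2 HZ2]]. exists (Nat.max m1 m2), (Z1 ++ Z2).
      intros x Hx HZ. split.
      + apply HZ1. apply (Idef_mono m1 (Nat.max m1 m2)); auto. apply Nat.le_max_l.
        intros s Hs. apply HZ. apply in_or_app; auto.
      + apply HZ2. apply (Idef_mono m2 (Nat.max m1 m2)); auto. apply Nat.le_max_r.
        intros s Hs. apply HZ. apply in_or_app; auto. }
  destruct (ultra_lemma Xt G HG) as [r0 [Hr0 Hr0G]].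
  assert (Ir0 : Iset r0).
  { split. split; auto.
    - intros z. apply Hr0G. exists 0, [z]. intros x _ Hx. apply Hx. left; auto.
    - intros B [[m ->]|[m ->]]; apply Hr0G; exists m, []; intros x Hx _; [right|]; auto. }
  destruct (below_ideal Xt opt HasT Tset Iset e r0) as [f [If [Eff [Eef Efe]]]].
  - exact (closed_contains Xt opt (fun B => exists m, B = Edef m)).
  - intros x [Hx _]; auto.
  - exact T_semig.
  - exact I_ideal.
  - intros r [Hr Hr']. split; auto.
  - exact Ir0.
  - exact Te.
  - exact Ee.
  - destruct If as [df Hf'].
    pose proof (d_ultra _ _ f df) as Hfu.
    assert (HfA : forall i, i < l -> f (fun x => A (x i))).
    { intros i Hi.
      set (g := img Xt S (fun x => x i) f).
      assert (Hh : forall x y u, opt x y = Some u -> op (x i) (y i) = Some (u i)).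
      { intros x y u E. apply (proj_hom S op l i Hi x y u E). }
      assert (dg : deltaS S op g).
      { split. apply img_ultra; auto. intros s. unfold g, img.
        apply (uf_mono f _ _ Hfu (d_phi _ _ f (diag S s0 l s) df)). intros x Hx.
        unfold phiS in *. rewrite <- (diag_lt S s0 l s i Hi).
        exact (proj1 (opT_def S op l _ _) Hx i Hi). }
      assert (Hge : img Xt S (fun x => x i) e = p).
      { unfold e, img. apply functional_extensionality; intro B. f_equal.
        apply functional_extensionality; intro c. rewrite diag_lt; auto. }
      assert (Egg : uf_mul S op g g = g).
      { unfold g. rewrite <- (img_mul Xt S opt op (fun x => x i) Hh f f df df). rewrite Eff. auto. }
      assert (Epg : uf_mul S op p g = g).
      { unfold g. rewrite <- Hge. rewrite <- (img_mul Xt S opt op (fun x => x i) Hh e f de df).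
        rewrite Eef. auto. }
      assert (Egp : uf_mul S op g p = g).
      { unfold g. rewrite <- Hge. rewrite <- (img_mul Xt S opt op (fun x => x i) Hh f e df de).
        rewrite Efe. auto. }
      pose proof (Hmin g dg Egg Epg Egp) as Eg.
      change (g (fun a => A a)). rewrite Eg. exact HA. }
    pose proof (uf_forall_lt f l (fun i x => A (x i)) Hfu HfA) as HAll.
    pose proof (Hf' (Idef 0) (or_intror (ex_intro _ 0 eq_refl))) as HI0.
    destruct (uf_nonempty f _ Hfu (uf_and f _ _ Hfu HI0 HAll)) as [x [[a [H [Ha [HH [_ Hv]]]]] HAx]].
    exists a. split; auto. exists H. split; auto. intros f0 Hf0.
    destruct (In_nth F f0 (fun _ => s0) Hf0) as [i [Hi Ei]].
    destruct (Hv i Hi) as [v [Ev [Hsv Eav]]]. unfold fi in Ev. rewrite Ei in Ev.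
    exists v. split; auto. split; auto. exists (x i). split; auto.
Qed.

End Exist.

Theorem theorem3p4 (S : Type) (op : S -> S -> option S)
  (Hinh : inhabited S)
  (Hassoc : ps_assoc S op) (Hcomm : ps_comm S op) (Hadeq : ps_adequate S op) :
  uf_closed S (Jdelta S op) /\ two_sided_ideal_delta S op (Jdelta S op).
Proof.
  destruct Hinh as [s0].
  split.
  - intros p Hp Hm. split.
    + apply (closed_delta S op); auto. intros A HA. destruct (Hm A HA) as [r [[Hr _] Hr']]. eauto.
    + intros A HA. destruct (Hm A HA) as [r [[_ HrJ] Hr']]. apply HrJ; auto.
  - split; [|split].
    + intros p [Hp _]; auto.
    + assert (Hne : exists x, deltaS S op x).
      { set (G := fun A : S -> Prop => exists Z, Z <> [] /\ forall x, sigmaS S op Z x -> A x).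
        assert (HG : is_filter S G).
        { split; [|split; [|split]].
          - intros [Z [HZ H]]. destruct (Hadeq Z HZ) as [t Ht]. exact (H t Ht).
          - exists [s0]. split; [discriminate|auto].
          - intros A B [Z [HZ H]] HAB. exists Z. auto.
          - intros A B [Z1 [HZ1 H1]] [Z2 [HZ2 H2]]. exists (Z1 ++ Z2). split.
            + destruct Z1; [congruence|]. simpl. discriminate.
            + intros x Hx. split; [apply H1|apply H2]; intros s Hs; apply Hx; apply in_or_app; auto. }
        destruct (ultra_lemma S G HG) as [p [Hp HpG]].
        exists p. split; auto. intros x. apply HpG. exists [x]. split; [discriminate|].
        intros t Ht. apply Ht. left; auto. }
      destruct (min_idem S op Hassoc Hne) as [p [Hp [Epp Hmin]]].
      exists p. split; auto. intros A HA F HF Fad W HW.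
      exact (J_from_min S op Hassoc Hcomm Hadeq s0 F W HF HW Fad p A Hp Epp Hmin HA).
    + intros p q Hp Hq. split; split.
      * apply mul_delta; auto. destruct Hq; auto.
      * apply (Jset_left S op Hassoc p q); auto.
      * apply mul_delta; auto. destruct Hq; auto.
      * apply (Jset_right S op Hassoc Hcomm p q); auto.
Qed.
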